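(* Let $F_1,F_2,F$ be full-dimensional tree topologies on $[N]$ with $F\in C(F_1,F_2)$. Then every equivalence class $C$ of 2-element subsets of $[N]$ with respect to $=_F$ is contained in a single equivalence class with respect to $=_{F_1}$ or in a single equivalence class with respect to $=_{F_2}$.
   Context: A tree topology $F$ on $[N]$ is a collection of subsets $S\subseteq[N]$ (clades) with $2\le|S|\le N-1$, pairwise either strictly nested or disjoint; it is full dimensional if $|F|=N-2$. For a 2-element subset $p\subseteq[N]$, $\mathrm{cl}_F(p)$ is the intersection of all $S\in F$ containing $p$ (or $[N]$ if none), and $p=_Fq$ iff $\mathrm{cl}_F(p)=\mathrm{cl}_F(q)$. $ut(F)\subseteq\mathbb{R}^{\binom N2}$ is the set of tree metric vectors ($w_{\{i,j\}}=$ path length between leaves $i,j$) of equidistant rooted phylogenetic trees (positive edge lengths, all leaves equidistant from the root) with tree topology $F$ (the set of leaf sets below internal edges). $C(F_1,F_2)$ is the set of tree topologies $F$ for which there exist $w^1\in ut(F_1)$ and $w^2\in ut(F_2)$ with $w^1\boxplus w^2\in ut(F)$, where $(w^1\boxplus w^2)_p=\max(w^1_p,w^2_p)$. *)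

(* Defs.v *)
From HB Require Import structures.
From mathcomp Require Import all_boot all_order all_algebra.
Set Implicit Arguments. Unset Strict Implicit. Unset Printing Implicit Defensive.
Import Order.TTheory GRing.Theory Num.Theory.
Local Open Scope ring_scope.

Definition tree_topology (N : nat) (F : {set {set 'I_N}}) : Prop :=
  (forall S, S \in F -> 2 <= #|S| <= N.-1)%N /\
  (forall S T, S \in F -> T \in F -> S != T ->
     S \proper T \/ T \proper S \/ [disjoint S & T]).

Definition full_dimensional (N : nat) (F : {set {set 'I_N}}) : Prop :=
  #|F| = (N - 2)%N.

Definition is_pair (N : nat) (p : {set 'I_N}) : Prop := #|p| = 2%N.

(* cl_F(p): intersection of all clades containing p ([N] if none). *)
Definition cl (N : nat) (F : {set {set 'I_N}}) (p : {set 'I_N}) : {set 'I_N} :=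
  \bigcap_(S in F | p \subset S) S.

(* Edges of the rooted tree with topology F, indexed by the leaf set below
   them: the clades of F (internal edges) and the singletons (leaf edges);
   the root [N] has no edge above it. *)
Definition tree_edges (N : nat) (F : {set {set 'I_N}}) : {set {set 'I_N}} :=
  (F :|: [set [set i] | i : 'I_N]) :\ setT.

(* ut(F): tree metric vectors (indexed by 2-element subsets) of equidistant
   rooted phylogenetic trees with topology F and positive edge lengths l.
   The path between leaves i,j uses exactly the edges whose leaf set
   contains exactly one of i, j. *)
Definition ut (R : realFieldType) (N : nat) (F : {set {set 'I_N}})
    (w : {set 'I_N} -> R) : Prop :=
  exists l : {set 'I_N} -> R,
    (forall S, S \in tree_edges F -> 0 < l S) /\
    (exists h : R, forall i : 'I_N,
        \sum_(S in tree_edges F | i \in S) l S = h) /\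
    (forall p, is_pair p ->
        w p = \sum_(S in tree_edges F | #|S :&: p| == 1%N) l S).

Definition tmax (R : realFieldType) (N : nat) (w1 w2 : {set 'I_N} -> R) :
  {set 'I_N} -> R := fun p => Num.max (w1 p) (w2 p).

Definition inC (R : realFieldType) (N : nat) (F1 F2 F : {set {set 'I_N}}) : Prop :=
  tree_topology F /\
  exists w1 w2 : {set 'I_N} -> R, ut F1 w1 /\ ut F2 w2 /\ ut F (tmax w1 w2).

(* Main.v *)
Require Import Defs.
From HB Require Import structures.
From mathcomp Require Import all_boot all_order all_algebra.
From mathcomp Require Import zify ring lra.
Set Implicit Arguments. Unset Strict Implicit. Unset Printing Implicit Defensive.
Import Order.TTheory GRing.Theory Num.Theory.

Module P1.

Definition laminar (N : nat) (L : {set {set 'I_N}}) : Prop :=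
  forall S T, S \in L -> T \in L -> S != T ->
     S \proper T \/ T \proper S \/ [disjoint S & T].

Lemma disj_com (N : nat) (S T : {set 'I_N}) x :
  [disjoint S & T] -> x \in S -> x \in T -> False.
Proof. by move=> d xS; rewrite (disjointFr d xS). Qed.

Lemma natlem (a b N : nat) : (a < b)%N -> (b < N)%N -> (a < N.-1)%N.
Proof. case: N => //= n; lia. Qed.

Section Bound.
Variables (N : nat) (i0 : 'I_N) (L : {set {set 'I_N}}).
Hypothesis lamL : laminar L.
Hypothesis szL : forall S, S \in L -> (2 <= #|S|)%N.

Definition top (S : {set 'I_N}) : 'I_N :=
  odflt i0 [pick i in S | [forall j in S, val j <= val i]].

Lemma topP S : S != set0 -> top S \in S /\ forall j, j \in S -> (val j <= val (top S))%N.
Proof.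
move=> /set0Pn [a aS].
rewrite /top; case: pickP => [i /andP [iS /forall_inP H]|H] /=; first by split.
have : (0 < #|S|)%N by apply/card_gt0P; exists a.
move=> /(eq_bigmax_cond (fun i : 'I_N => val i)) [k kS km].
have := H k; rewrite kS /=; move/negP; case; apply/forall_inP => j jS.
by rewrite -km; apply: leq_bigmax_cond.
Qed.

Definition Ch (S : {set 'I_N}) : {set {set 'I_N}} := [set S' in L | (S' \proper S) && (top S \in S')].
Definition M (S : {set 'I_N}) : {set 'I_N} := top S |: \bigcup_(S' in Ch S) S'.
Definition g (S : {set 'I_N}) : 'I_N := top (S :\: M S).

Lemma RnonE S : S \in L -> S :\: M S != set0.
Proof.
move=> SL; have S0 : S != set0.
  by apply/negP => /eqP E; have := szL SL; rewrite E cards0.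
rewrite setD_eq0; apply/negP => sub.
have [tS _] := topP S0.
case: (set_0Vmem (Ch S)) => [C0|[S0' S0C]].
  move: sub; rewrite /M C0 big_set0 setU0 => sub.
  by have := subset_leq_card sub; rewrite cards1; have := szL SL; case: #|S| => [|[|]].
pose Ss := [arg max_(S' > S0' in Ch S) #|S'|].
have : Ss \in Ch S /\ forall S', S' \in Ch S -> (#|S'| <= #|Ss|)%N.
  by rewrite /Ss; case: arg_maxnP => // i iC H; split.
move=> [SsC Smax].
have sMSs : M S \subset Ss.
  move: (SsC); rewrite inE => /and3P [SsL _ tSs].
  rewrite /M subUset sub1set tSs /=; apply/bigcupsP => S' S'C.
  move: (S'C); rewrite inE => /and3P [S'L _ tS'].
  case: (eqVneq S' Ss) => [->//|ne].
  case: (lamL S'L SsL ne) => [/proper_sub //|[pr|d]].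
    by have := Smax _ S'C; have := proper_card pr; rewrite ltnNge => /negP.
  by case: (disj_com d tS' tSs).
move: (SsC); rewrite inE => /and3P [_ pr _].
have : S \proper S by apply: (sub_proper_trans (subset_trans sub sMSs) pr).
by rewrite properE subxx.
Qed.

Lemma gP S : S \in L ->
  [/\ g S \in S, g S \notin M S & forall j, j \in S -> j \notin M S -> (val j <= val (g S))%N].
Proof.
move=> SL; have [gin gmax] := topP (RnonE SL).
move: gin; rewrite /g inE => /andP [gM gS]; split => // j jS jM.
by apply: gmax; rewrite inE jM.
Qed.

Lemma topS S : S \in L -> top S \in S /\ forall j, j \in S -> (val j <= val (top S))%N.
Proof.
move=> SL; apply: topP; apply/negP => /eqP E; have := szL SL; by rewrite E cards0.
Qed.

Lemma g_neq S S' : S \in L -> S' \in L -> S \proper S' -> g S != g S'.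
Proof.
move=> SL S'L pr; apply/negP => /eqP E.
have [gS gM gmax] := gP SL; have [gS' gM' gmax'] := gP S'L.
have [tS tmax] := topS SL; have [tS' tmax'] := topS S'L.
have subM : forall S'', S'' \in Ch S' -> S'' \subset M S'.
  by move=> S'' H; rewrite /M; apply: subsetU; apply/orP; right; apply: bigcup_sup H.
case tSin: (top S' \in S).
  have : S \in Ch S' by rewrite inE SL pr tSin.
  by move/subM => /subsetP /(_ _ gS); rewrite E (negbTE gM').
have tSS' : top S \in S' by apply: (subsetP (proper_sub pr)).
case tM: (top S \in M S').
  move: tM; rewrite /M in_setU1 => /orP [/eqP e|].
    by move: tSin; rewrite -e tS.
  move=> /bigcupP [S'' S''C tS''].
  move: (S''C); rewrite inE => /and3P [S''L pr'' tS'S''].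
  have ne : S != S'' by apply/negP => /eqP e; move: tSin; rewrite e tS'S''.
  case: (lamL SL S''L ne) => [pr2|[pr2|d]].
    by have := subM _ S''C => /subsetP /(_ _ (subsetP (proper_sub pr2) _ gS)); rewrite E (negbTE gM').
    by move: tSin; rewrite (subsetP (proper_sub pr2) _ tS'S'').
  by case: (disj_com d tS tS'').
have h1 := gmax' _ tSS' (negbT tM).
have h2 := tmax _ gS.
have : g S = top S by apply: val_inj; apply/eqP; rewrite eqn_leq h2 E h1.
move=> e; move: gM; rewrite e /M in_setU1 eqxx //.
Qed.

Lemma g_inj : {in L &, injective g}.
Proof.
move=> S S' SL S'L E; apply/eqP; apply/negP => /negP ne.
have [gS _ _] := gP SL; have [gS' _ _] := gP S'L.
case: (lamL SL S'L ne) => [pr|[pr|d]].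
  by move: (g_neq SL S'L pr); rewrite E eqxx.
  by move: (g_neq S'L SL pr); rewrite E eqxx.
by apply: (disj_com d gS); rewrite E.
Qed.

Lemma g_lt S : S \in L -> (val (g S) < N.-1)%N.
Proof.
move=> SL; have [gS gM _] := gP SL; have [tS tmax] := topS SL.
have h := tmax _ gS.
have ne : val (g S) != val (top S).
  by apply/negP => /eqP /val_inj e; move: gM; rewrite e /M in_setU1 eqxx.
have : (val (g S) < val (top S))%N by rewrite ltn_neqAle ne h.
move=> lt; have := ltn_ord (top S); exact: natlem.
Qed.

Lemma laminar_bound : (#|L| <= N.-1)%N.
Proof.
rewrite cardE.
have -> : size (enum L) = size (map (fun S => val (g S)) (enum L)) by rewrite size_map.
rewrite -(size_iota 0 N.-1); apply: uniq_leq_size.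
  rewrite map_inj_in_uniq ?enum_uniq // => S S' SL S'L /val_inj.
  by apply: g_inj; rewrite -mem_enum.
move=> x /mapP [S SL ->]; rewrite mem_iota add0n /=; apply: g_lt; by rewrite -mem_enum.
Qed.
End Bound.

End P1.
Import P1.

Module P2.
Local Open Scope ring_scope.

Definition U (N : nat) (G : {set {set 'I_N}}) (q : {set 'I_N}) : {set {set 'I_N}} :=
  [set S in G | q \subset S].
Definition D (R : realFieldType) (N : nat) (G : {set {set 'I_N}}) (l : {set 'I_N} -> R) q : R :=
  \sum_(S in U G q) l S.

Lemma cardI2 (N : nat) (S : {set 'I_N}) x y : x != y ->
  #|S :&: [set x; y]| = ((x \in S) + (y \in S))%N.
Proof.
move=> ne; case xS: (x \in S); case yS: (y \in S).
- have -> : S :&: [set x; y] = [set x; y].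
    by apply/setP => z; rewrite !inE; case: (eqVneq z x) => [->|zx] /=; [rewrite ?xS ?yS ?(negbTE ne) ?andbT ?andbF ?orbT|case: (eqVneq z y) => [->|zy] /=; rewrite ?xS ?yS ?andbF ?andbT].
  by rewrite cards2 ne.
- have -> : S :&: [set x; y] = [set x].
    by apply/setP => z; rewrite !inE; case: (eqVneq z x) => [->|zx] /=; [rewrite ?xS ?yS ?(negbTE ne) ?andbT ?andbF ?orbT|case: (eqVneq z y) => [->|zy] /=; rewrite ?xS ?yS ?andbF ?andbT].
  by rewrite cards1.
- have -> : S :&: [set x; y] = [set y].
    by apply/setP => z; rewrite !inE; case: (eqVneq z x) => [->|zx] /=; [rewrite ?xS ?yS ?(negbTE ne) ?andbT ?andbF ?orbT|case: (eqVneq z y) => [->|zy] /=; rewrite ?xS ?yS ?andbF ?andbT].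
  by rewrite cards1.
- have -> : S :&: [set x; y] = set0.
    by apply/setP => z; rewrite !inE; case: (eqVneq z x) => [->|zx] /=; [rewrite ?xS ?yS ?(negbTE ne) ?andbT ?andbF ?orbT|case: (eqVneq z y) => [->|zy] /=; rewrite ?xS ?yS ?andbF ?andbT].
  by rewrite cards0.
Qed.

Lemma notT (N : nat) (G : {set {set 'I_N}}) S : tree_topology G -> S \in G -> S != setT.
Proof.
move=> [sz _] SG; apply/negP => /eqP E; have := sz _ SG; rewrite E cardsT card_ord.
by case: N {G S SG sz E} => [|n] //=; rewrite ltnn andbF.
Qed.

Lemma ut_rep (R : realFieldType) (N : nat) (G : {set {set 'I_N}}) w :
  tree_topology G -> ut G w -> exists (l : {set 'I_N} -> R) (c : R),
  (forall S, S \in G -> 0 < l S) /\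
  forall x y : 'I_N, x != y -> w [set x; y] = c - 2 * D G l [set x; y].
Proof.
move=> tG [l [lpos [[h hh] hw]]]; exists l, (h + h); split.
  by move=> S SG; apply: lpos; rewrite /tree_edges !inE (notT tG SG) SG.
move=> x y ne; rewrite hw; last by rewrite /is_pair cards2 ne.
have eD : \sum_(S in tree_edges G | [set x; y] \subset S) l S = D G l [set x; y].
  rewrite /D; apply: eq_bigl => S; rewrite /tree_edges !inE.
  case: (boolP ([set x; y] \subset S)) => sub; last by rewrite ?andbF.
  idtac.
  rewrite ?andbT; case SG: (S \in G) => /=; first by rewrite (notT tG SG).
  apply/negP => /andP [_ /imsetP [i _ Ei]].
  by have := subset_leq_card sub; rewrite Ei cards1 cards2 ne.
rewrite -eD.
have key : \sum_(S in tree_edges G | #|S :&: [set x; y]| == 1%N) l S +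
   2 * \sum_(S in tree_edges G | [set x; y] \subset S) l S =
   \sum_(S in tree_edges G | x \in S) l S + \sum_(S in tree_edges G | y \in S) l S.
  rewrite !big_mkcondr mulr_sumr -!big_split /=; apply: eq_bigr => S _.
  rewrite cardI2 // subUset !sub1set.
  by case: (x \in S); case: (y \in S) => /=; lra.
rewrite hh hh in key; lra.
Qed.

End P2.
Import P2.

Module P3.
Local Open Scope ring_scope.

Lemma set2C (N : nat) (x y : 'I_N) : [set x; y] = [set y; x].
Proof. by rewrite setUC. Qed.

Lemma sub2 (N : nat) (x y : 'I_N) (S : {set 'I_N}) : ([set x; y] \subset S) = (x \in S) && (y \in S).
Proof. by rewrite subUset !sub1set. Qed.

Lemma triangle (N : nat) (G : {set {set 'I_N}}) (lamG : laminar G) x y z :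
  U G [set x; z] \subset U G [set x; y] \/ U G [set y; z] \subset U G [set x; y].
Proof.
case: (boolP (U G [set x; z] \subset U G [set x; y])) => h1; [by left|].
case: (boolP (U G [set y; z] \subset U G [set x; y])) => h2; [by right|].
move: h1 h2 => /subsetPn [S1 S1in S1n] /subsetPn [S2 S2in S2n].
move: S1in S1n S2in S2n; rewrite !inE !sub2.
move=> /and3P [S1G xS1 zS1]; rewrite S1G xS1 /= => yS1.
move=> /and3P [S2G yS2 zS2]; rewrite S2G yS2 /= andbT => xS2.
have ne : S1 != S2 by apply/negP => /eqP e; move: xS2; rewrite -e xS1.
case: (lamG _ _ S1G S2G ne) => [/proper_sub/subsetP/(_ _ xS1)|[/proper_sub/subsetP/(_ _ yS2)|d]].
- by rewrite (negbTE xS2).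
- by rewrite (negbTE yS1).
- by case: (disj_com d zS1 zS2).
Qed.

Section Sums.
Variables (R : realFieldType) (N : nat) (G : {set {set 'I_N}}) (l : {set 'I_N} -> R).
Hypothesis lpos : forall S, S \in G -> 0 < l S.

Lemma sum_sub (A B : {set {set 'I_N}}) : B \subset G -> A \subset B ->
  \sum_(S in A) l S <= \sum_(S in B) l S.
Proof.
move=> BG AB; rewrite [X in _ <= X](big_setID A) /= (setIidPr AB) lerDl.
apply: sumr_ge0 => S; rewrite inE => /andP [_ SB]; apply/ltW/lpos.
exact: (subsetP BG).
Qed.

Lemma sum_proper (A B : {set {set 'I_N}}) : B \subset G -> A \proper B ->
  \sum_(S in A) l S < \sum_(S in B) l S.
Proof.
move=> BG /properP [AB [S0 S0B S0A]]; rewrite [X in _ < X](big_setID A) /= (setIidPr AB) ltrDl.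
rewrite (bigD1 S0) /=; last by rewrite inE S0A.
apply: ltr_pwDl; first by apply/lpos/(subsetP BG).
apply: sumr_ge0 => S; rewrite !inE => /andP [/andP [_ SB] _]; apply/ltW/lpos.
exact: (subsetP BG).
Qed.

Lemma UG q : U G q \subset G.
Proof. by apply/subsetP => S; rewrite inE => /andP []. Qed.

Lemma D_sub q q' : U G q \subset U G q' -> D G l q <= D G l q'.
Proof. by move=> h; apply: sum_sub => //; apply: UG. Qed.
Lemma D_proper q q' : U G q \proper U G q' -> D G l q < D G l q'.
Proof. by move=> h; apply: sum_proper => //; apply: UG. Qed.
End Sums.

End P3.
Import P3.

Module P4.

Section Class.
Variables (N : nat) (F : {set {set 'I_N}}) (p : {set 'I_N}).
Hypothesis tF : tree_topology F.
Hypothesis fdF : full_dimensional F.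
Hypothesis pp : is_pair p.

Let lamF : laminar F := tF.2.

Definition CC q := U F q = U F p.
Definition inside x := forall S, S \in F -> p \subset S -> x \in S.

Lemma C_inside x y : CC [set x; y] -> inside x /\ inside y.
Proof.
move=> h; split => S SF pS.
- have : S \in U F [set x; y] by rewrite h inE SF pS.
  by rewrite inE sub2 => /and3P [].
- have : S \in U F [set x; y] by rewrite h inE SF pS.
  by rewrite inE sub2 => /and3P [].
Qed.

Lemma inside_sub x y : inside x -> inside y -> U F p \subset U F [set x; y].
Proof.
move=> hx hy; apply/subsetP => S; rewrite !inE sub2 => /andP [SF pS].
by rewrite SF (hx _ SF pS) (hy _ SF pS).
Qed.

Lemma notC_proper x y : inside x -> inside y -> ~ CC [set x; y] ->
  U F p \proper U F [set x; y].
Proof.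
move=> hx hy nC; rewrite properEneq inside_sub // andbT.
by apply/negP => /eqP e; apply: nC.
Qed.

Lemma neither x y z : CC [set x; y] -> inside z -> CC [set x; z] \/ CC [set y; z].
Proof.
move=> Cxy iz; have [ix iy] := C_inside Cxy.
case: (eqVneq (U F [set x; z]) (U F p)) => [e|n1]; [by left|].
case: (eqVneq (U F [set y; z]) (U F p)) => [e|n2]; [by right|].
exfalso.
have : U F p \proper U F [set x; z] by apply: notC_proper => // e; rewrite e eqxx in n1.
move=> /properP [_ [S1 S1in S1n]].
have : U F p \proper U F [set y; z] by apply: notC_proper => // e; rewrite e eqxx in n2.
move=> /properP [_ [S2 S2in S2n]].
move: S1in S2in; rewrite !inE !sub2 => /and3P [S1F xS1 zS1] /and3P [S2F yS2 zS2].
move: S1n S2n; rewrite !inE S1F S2F /= => pS1 pS2.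
have key : forall S, S \in F -> x \in S -> y \in S -> p \subset S.
  move=> S SF xS yS; have : S \in U F [set x; y] by rewrite inE SF sub2 xS yS.
  by rewrite Cxy inE => /andP [].
case: (eqVneq S1 S2) => [e|ne].
  by move: pS1; rewrite key // e.
case: (lamF S1F S2F ne) => [/proper_sub/subsetP/(_ _ xS1) xS2|[/proper_sub/subsetP/(_ _ yS2) yS1|d]].
- by move: pS2; rewrite key.
- by move: pS1; rewrite key.
- by case: (disj_com d zS1 zS2).
Qed.

Definition comp v : {set 'I_N} :=
  v |: \bigcup_(S in F | (v \in S) && ~~ (p \subset S)) S.

Lemma comp_sub v S : inside v -> S \in F -> p \subset S -> comp v \subset S.
Proof.
move=> iv SF pS; rewrite subUset sub1set (iv _ SF pS) /=; apply/bigcupsP => S'.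
move=> /andP [S'F /andP [vS' pS']].
have ne : S' != S by apply/negP => /eqP e; move: pS'; rewrite e pS.
case: (lamF S'F SF ne) => [/proper_sub //|[/proper_sub sub|d]].
  by move: pS'; rewrite (subset_trans pS sub).
by case: (disj_com d vS' (iv _ SF pS)).
Qed.

Lemma sub_comp v S : S \in F -> v \in S -> ~~ (p \subset S) -> S \subset comp v.
Proof.
move=> SF vS pS; rewrite /comp; apply: subsetU; apply/orP; right.
by apply: bigcup_sup; rewrite SF vS.
Qed.

Lemma comp_core v S u : S \in F -> ~~ (p \subset S) -> v \notin S -> u \in S -> u \in comp v ->
  S \subset comp v.
Proof.
move=> SF pS vS uS; rewrite /comp in_setU1 => /orP [/eqP e|].
  by move: vS; rewrite -e uS.
move=> /bigcupP [S' /andP [S'F /andP [vS' pS']] uS'].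
have ne : S != S' by apply/negP => /eqP e; move: vS; rewrite e vS'.
case: (lamF SF S'F ne) => [/proper_sub sub|[/proper_sub/subsetP/(_ _ vS') vS2|d]].
- by apply: (subset_trans sub); apply: sub_comp.
- by rewrite vS2 in vS.
- by case: (disj_com d uS uS').
Qed.

Definition lamrel (A B : {set 'I_N}) := A \proper B \/ B \proper A \/ [disjoint A & B].

Lemma lamrel_sym A B : lamrel A B -> lamrel B A.
Proof. by case=> [h|[h|h]]; [right; left|left|right; right; rewrite disjoint_sym]. Qed.

Lemma both x y z : x != y -> x != z -> y != z ->
  CC [set x; y] -> CC [set x; z] -> CC [set y; z] -> False.
Proof.
move=> nxy nxz nyz Cxy Cxz Cyz.
have [ix iy] := C_inside Cxy; have [_ iz] := C_inside Cxz.
pose K := comp x :|: comp y.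
have Nge2 : (2 <= N)%N by have := max_card p; rewrite pp card_ord.
have zcomp : forall v, CC [set v; z] -> v != z -> z \notin comp v.
  move=> v Cvz nvz; rewrite /comp in_setU1 eq_sym (negbTE nvz) /=.
  apply/negP => /bigcupP [S /andP [SF /andP [vS pS]] zS].
  have : S \in U F [set v; z] by rewrite inE SF sub2 vS zS.
  by rewrite Cvz inE SF (negbTE pS).
have zK : z \notin K by rewrite inE negb_or zcomp // zcomp.
have xK : x \in K by rewrite /K in_setU /comp in_setU1 eqxx.
have yK : y \in K by rewrite /K in_setU /comp !in_setU1 eqxx !orbT.
have KF : K \notin F.
  apply/negP => KF; have : K \in U F [set x; y] by rewrite inE KF sub2 xK yK.
  rewrite Cxy inE KF /= => pK.
  by move: zK; rewrite (iz _ KF pK).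
have KT : K != setT by apply/negP => /eqP e; move: zK; rewrite e inE.
have lamKS : forall S, S \in F -> S != K -> lamrel K S.
  move=> S SF ne; case: (boolP (p \subset S)) => pS.
    left; rewrite properEneq eq_sym ne /= subUset !comp_sub //.
  case xS: (x \in S).
    by right; left; rewrite properEneq ne /=; apply: subsetU; rewrite sub_comp.
  case yS: (y \in S).
    by right; left; rewrite properEneq ne /=; apply: subsetU; rewrite (sub_comp (v := y)) ?orbT.
  case: (boolP (S \subset K)) => sK.
    by right; left; rewrite properEneq ne.
  right; right; rewrite -setI_eq0; apply/eqP/setP => u; rewrite inE in_set0; apply/negP => /andP [uK uS]; move/negP: sK; apply.
  move: uK; rewrite inE => /orP [uc|uc]; apply: subsetU; apply/orP; [left|right].
  - by apply: (comp_core SF pS (negbT xS) uS uc).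
  - by apply: (comp_core SF pS (negbT yS) uS uc).
pose F' := setT |: (K |: F).
have lam' : laminar F'.
  have gen : forall S T, S \in F' -> T \in F' -> S != T -> lamrel S T.
    move=> S T; rewrite !inE => /orP [/eqP eS|/orP [/eqP eS|SF]] /orP [/eqP eT|/orP [/eqP eT|TF]] ne.
    - by rewrite eS eT eqxx in ne.
    - by right; left; rewrite eS eT properT.
    - right; left; rewrite eS properT; apply/negP => /eqP e; have := notT tF TF; by rewrite e eqxx.
    - by left; rewrite eS eT properT.
    - by rewrite eS eT eqxx in ne.
    - by rewrite eS; apply: lamKS => //; rewrite eq_sym -eS.
    - left; rewrite eT properT; apply/negP => /eqP e; have := notT tF SF; by rewrite e eqxx.
    - by rewrite eT; apply: lamrel_sym; apply: lamKS => //; rewrite -eT.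
    - exact: lamF SF TF ne.
  move=> S T SF TF ne; exact: gen.
have sz' : forall S, S \in F' -> (2 <= #|S|)%N.
  move=> S; rewrite !inE => /orP [/eqP ->|/orP [/eqP ->|SF]].
  - by rewrite cardsT card_ord.
  - have : [set x; y] \subset K by rewrite sub2 xK yK.
    by move/subset_leq_card; rewrite cards2 nxy.
  - by have := tF.1 _ SF => /andP [].
have := laminar_bound x lam' sz'.
rewrite /F' cardsU1 cardsU1 !inE KF eq_sym (negbTE KT) /=.
rewrite (_ : ([set: 'I_N] \in F) = false); last by apply/negP => TF; have := notT tF TF; rewrite eqxx.
rewrite fdF; move: Nge2; clear; case: N => [|[|n]] //= _; rewrite !subSS subn0; lia.
Qed.
End Class.

End P4.
Import P4.

Module P5.
Local Open Scope ring_scope.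

Lemma maxc (R : realFieldType) (x y : R) :
  x <= Num.max x y /\ y <= Num.max x y /\ (Num.max x y = x \/ Num.max x y = y).
Proof. rewrite maxEle; case: ifP => h; [split; [|split]; [| |right] | split; [|split]; [| |left]] => //; lra. Qed.

Lemma cl_sub (N : nat) (G : {set {set 'I_N}}) (q : {set 'I_N}) : q \subset cl G q.
Proof. by apply/bigcapsP => S /andP []. Qed.

Lemma cl_inf (N : nat) (G : {set {set 'I_N}}) (q S : {set 'I_N}) : S \in G -> q \subset S -> cl G q \subset S.
Proof. by move=> SG qS; apply: (bigcap_inf S); rewrite SG qS. Qed.

Lemma clU (N : nat) (G : {set {set 'I_N}}) (q q' : {set 'I_N}) : cl G q = cl G q' -> U G q = U G q'.
Proof.
move=> e; apply/setP => S; rewrite !inE; case SG: (S \in G) => //=.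
apply/idP/idP => h.
- by apply: (subset_trans (cl_sub G q')); rewrite -e; apply: cl_inf.
- by apply: (subset_trans (cl_sub G q)); rewrite e; apply: cl_inf.
Qed.

Lemma Ucl (N : nat) (G : {set {set 'I_N}}) (q q' : {set 'I_N}) : U G q = U G q' -> cl G q = cl G q'.
Proof.
move=> e; have E : forall r, cl G r = \bigcap_(S in U G r) S.
  by move=> r; rewrite /cl; apply: eq_bigl => S; rewrite inE.
by rewrite !E e.
Qed.

Section Propag.
Variables (R : realFieldType) (N : nat) (F G : {set {set 'I_N}}) (a b : 'I_N).
Hypothesis hab : a != b.
Let p := [set a; b].
Hypothesis tF : tree_topology F.
Hypothesis fdF : full_dimensional F.
Hypothesis lamG : laminar G.
Variables (l lG : {set 'I_N} -> R) (c cG : R) (w wG : {set 'I_N} -> R).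
Hypothesis lpos : forall S, S \in F -> 0 < l S.
Hypothesis lGpos : forall S, S \in G -> 0 < lG S.
Hypothesis wrep : forall x y, x != y -> w [set x; y] = c - 2 * D F l [set x; y].
Hypothesis wGrep : forall x y, x != y -> wG [set x; y] = cG - 2 * D G lG [set x; y].
Hypothesis wle : forall x y, x != y -> wG [set x; y] <= w [set x; y].

Let pp : is_pair p. Proof. by rewrite /is_pair cards2 hab. Qed.

Definition PP q := U G q = U G p /\ wG q = w p.

Lemma step x y z : x != y -> x != z -> y != z ->
  CC F p [set x; y] -> CC F p [set x; z] -> PP [set x; y] -> PP [set x; z].
Proof.
move=> nxy nxz nyz Cxy Cxz [Uxy wxy].
have nC : ~ CC F p [set y; z] by move=> Cyz; apply: (both tF fdF pp nxy nxz nyz).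
have [ix iy] := C_inside Cxy; have [_ iz] := C_inside Cxz.
have Dxz : D F l [set x; z] = D F l p by rewrite /D Cxz.
have Dyz : D F l p < D F l [set y; z] by apply: D_proper => //; apply: notC_proper.
have wp : w p = c - 2 * D F l p by rewrite /p wrep.
have e1 := wle nyz; have e2 := wle nxz.
rewrite wrep // in e1; rewrite wrep // in e2.
rewrite wGrep // in e1; rewrite wGrep // in e2.
rewrite wGrep // wp in wxy.
have h1 : D G lG [set x; y] < D G lG [set y; z] by lra.
have h2 : D G lG [set x; y] <= D G lG [set x; z] by lra.
have s1 : U G [set x; z] \subset U G [set x; y].
  case: (triangle lamG x y z) => // s.
  by have := D_sub lGpos s; lra.
have s2 : U G [set x; y] \subset U G [set x; z].
  case: (triangle lamG x z y) => // s.
  by have := D_sub lGpos (subset_trans s s1); rewrite set2C; lra.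
have E : U G [set x; y] = U G [set x; z] by apply/eqP; rewrite eqEsubset s1 s2.
split; first by rewrite -E.
have : D G lG [set x; y] = D G lG [set x; z] by rewrite /D E.
by rewrite wGrep // wp; lra.
Qed.

Lemma step' x y z : x != y -> x != z -> y != z ->
  CC F p [set x; y] -> CC F p [set x; z] -> PP [set x; y] -> PP [set z; x].
Proof. by move=> *; rewrite set2C; apply: (step (y := y)). Qed.

Lemma propagate x y : x != y -> CC F p [set x; y] -> PP p -> PP [set x; y].
Proof.
move=> nxy Cxy Pp.
have Cp : CC F p p by [].
have Cba : CC F p [set b; a] by rewrite /CC set2C.
have Pba : PP [set b; a] by rewrite set2C.
have Cyx : CC F p [set y; x] by rewrite /CC set2C.
have gen : forall u v z, u != v -> CC F p [set u; v] -> PP [set u; v] ->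
    CC F p [set u; z] -> u != z -> PP [set u; z].
  move=> u v z nuv Cuv Puv Cuz nuz; case: (eqVneq v z) => [<-//|nvz].
  exact: (step nuv nuz nvz).
have nba : b != a by rewrite eq_sym.
case: (eqVneq x a) => [exa|nxa].
  by subst x; apply: (gen a b y hab Cp Pp Cxy nxy).
case: (eqVneq x b) => [exb|nxb].
  by subst x; apply: (gen b a y nba Cba Pba Cxy nxy).
case: (eqVneq y a) => [eya|nya].
  subst y; rewrite set2C; apply: (gen a b x hab Cp Pp) => //; by rewrite eq_sym.
case: (eqVneq y b) => [eyb|nyb].
  subst y; rewrite set2C; apply: (gen b a x nba Cba Pba) => //; by rewrite eq_sym.
have [_ ix] : inside F p a /\ inside F p x.
  by split; [case: (C_inside Cp)|case: (C_inside Cxy)].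
case: (neither tF Cp ix) => [Cax|Cbx].
- have Pax : PP [set a; x] by apply: (gen a b x hab Cp Pp Cax); rewrite eq_sym.
  have Pxa : PP [set x; a] by rewrite set2C.
  have Cxa : CC F p [set x; a] by rewrite /CC set2C.
  exact: (gen x a y) => //; rewrite eq_sym.
- have Pbx : PP [set b; x] by apply: (gen b a x nba Cba Pba Cbx); rewrite eq_sym.
  have Pxb : PP [set x; b] by rewrite set2C.
  have Cxb : CC F p [set x; b] by rewrite /CC set2C.
  exact: (gen x b y) => //; rewrite eq_sym.
Qed.
End Propag.

End P5.
Import P5.

Theorem mainTheorem17 (R : realFieldType) (N : nat)
    (F1 F2 F : {set {set 'I_N}}) :
  tree_topology F1 -> full_dimensional F1 ->
  tree_topology F2 -> full_dimensional F2 ->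
  tree_topology F -> full_dimensional F ->
  inC R F1 F2 F ->
  forall p : {set 'I_N}, is_pair p ->
    (exists p1 : {set 'I_N}, is_pair p1 /\
       forall q, is_pair q -> cl F q = cl F p -> cl F1 q = cl F1 p1) \/
    (exists p2 : {set 'I_N}, is_pair p2 /\
       forall q, is_pair q -> cl F q = cl F p -> cl F2 q = cl F2 p2).
Proof.
move=> t1 _ t2 _ tF fdF [_ [w1 [w2 [u1 [u2 u]]]]] p pp.
have [l1 [c1 [l1pos w1rep]]] := ut_rep t1 u1.
have [l2 [c2 [l2pos w2rep]]] := ut_rep t2 u2.
have [l [c [lpos wrep]]] := ut_rep tF u.
have /cards2P [a [b [hab ep]]] : #|p| == 2%N by apply/eqP.
subst p.
have key : forall (G : {set {set 'I_N}}) (lG : {set 'I_N} -> R) (cG : R) (wG : {set 'I_N} -> R),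
    tree_topology G -> (forall S, S \in G -> (0 < lG S)%R) ->
    (forall x y : 'I_N, x != y -> wG [set x; y] = (cG - 2 * D G lG [set x; y])%R) ->
    (forall x y : 'I_N, x != y -> (wG [set x; y] <= tmax w1 w2 [set x; y])%R) ->
    wG [set a; b] = tmax w1 w2 [set a; b] ->
    exists p1 : {set 'I_N}, is_pair p1 /\
       forall q, is_pair q -> cl F q = cl F [set a; b] -> cl G q = cl G p1.
  move=> G lG cG wG tG lGpos wGrep wle wp; exists [set a; b]; split => // q qp e.
  have /cards2P [x [y [nxy eq]]] : #|q| == 2%N by apply/eqP.
  subst q; apply: Ucl.
  have := propagate hab tF fdF tG.2 lpos lGpos wrep wGrep wle nxy (clU e).
  by case => //; split.
have m := maxc (w1 [set a; b]) (w2 [set a; b]).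
case: m => _ [_ [m|m]].
- left; apply: (key F1 l1 c1 w1 t1 l1pos w1rep) => //.
  by move=> x y _; rewrite /tmax; case: (maxc (w1 [set x; y]) (w2 [set x; y])).
- right; apply: (key F2 l2 c2 w2 t2 l2pos w2rep) => //.
  by move=> x y _; rewrite /tmax; case: (maxc (w1 [set x; y]) (w2 [set x; y])) => _ [].
Qed.
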